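(* Let $\mathcal F\subset\mathcal F_X$ be a convex set of feasible environments. For each decision rule $p$ and each history $h$, $$\inf_{F\in\mathcal F(h)}\frac{U_p(F,h)}{V(F,h)}=\inf_{F\in\mathcal F}\frac{U_p(F,h)}{V(F,h)}.$$
   Context: Sequential search model. Fix a discount factor $\delta\in(0,1)$, a Borel set $X\subset\mathbb{R}_+$ with $0\in X$, and an outside option $x_0>0$. Let $\mathcal F_X$ be the set of Borel probability distributions on $X$ with finite mean (''environments''). A history is $h_t=(x_0,x_1,\dots,x_t)$, $t\ge0$, $x_i\in X$, with best-so-far alternative $y_t=\max\{x_0,\dots,x_t\}$. A decision rule $p$ assigns to each history $h$ a stopping probability $p(h)\in[0,1]$. Given any environment $F$ and a history $h_t$, future alternatives $x_{t+1},x_{t+2},\dots$ are i.i.d. with law $F$; at each round $s\ge t$ the individual stops with probability $p(h_s)$, and stopping at round $s$ yields $\delta^{s-t}y_s$ (never stopping yields $0$). $U_p(F,h)$ is this expected payoff (defined for every $F$, whether or not consistent with $h$), and $V(F,h)=\sup_pU_p(F,h)$. An environment $F$ is consistent with $h_t$ if the sequence $x_1,\dots,x_t$ occurs with positive probability under $F$; $\mathcal F(h)$ is the set of environments in $\mathcal F$ consistent with $h$. *)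

(* Defs.v *)
From mathcomp Require Import all_boot all_order all_algebra.
From mathcomp Require Import all_classical all_reals all_analysis.
Set Implicit Arguments. Unset Strict Implicit. Unset Printing Implicit Defensive.
Import Order.TTheory GRing.Theory Num.Theory.
Local Open Scope classical_set_scope.
Local Open Scope ring_scope.

(* A history h_t = (x0, x1, ..., xt) is represented by the sequence
   [:: x1; ...; xt] : seq R, the outside option x0 being a fixed parameter. *)

Section Search.
Variable R : realType.

Definition best (x0 : R) (h : seq R) : R := foldr Num.max x0 h.

Definition is_rule (p : seq R -> R) : Prop := forall h, 0 <= p h <= 1.

(* expected discounted payoff, from history h, of the event "stop within the
   next n rounds" (rounds t, ..., t+n), future alternatives i.i.d. with law F *)
Fixpoint Un (delta x0 : R) (p : seq R -> R) (F : probability R R) (n : nat)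
  (h : seq R) {struct n} : \bar R :=
  match n with
  | 0 => (p h * best x0 h)%:E
  | n'.+1 => ((p h * best x0 h)%:E +
      ((1 - p h) * delta)%:E * \int[F]_x Un delta x0 p F n' (rcons h x))%E
  end.

(* U_p(F,h): expected payoff (never stopping yields 0); the partial payoffs are
   nondecreasing in n, so this is their limit *)
Definition U (delta x0 : R) (p : seq R -> R) (F : probability R R) (h : seq R)
  : \bar R := ereal_sup (range (fun n => Un delta x0 p F n h)).

Definition V (delta x0 : R) (F : probability R R) (h : seq R) : \bar R :=
  ereal_sup [set U delta x0 p F h | p in is_rule].

Definition environment (X : set R) (F : probability R R) : Prop :=
  F X = 1%E /\ F.-integrable setT (fun x => x%:E).

Definition consistent (F : probability R R) (h : seq R) : Prop :=
  (0 < \big[*%E/1%E]_(x <- h) F [set x])%E.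

Definition convex_envs (FF : set (probability R R)) : Prop :=
  forall F G, FF F -> FF G -> forall l : R, 0 <= l <= 1 ->
    exists H, FF H /\ forall A, measurable A ->
      H A = (l%:E * F A + (1 - l)%:E * G A)%E.

End Search.

(* Main.v *)
Require Import Defs.
From mathcomp Require Import all_boot all_order all_algebra.
From mathcomp Require Import all_classical all_reals all_analysis.
Import Order.TTheory GRing.Theory Num.Theory.
From mathcomp Require Import ring lra.
Local Open Scope classical_set_scope.
Local Open Scope ring_scope.
Import HBNNSimple.
Section Inner.
Context {R : realType}.
Local Open Scope ereal_scope.
Implicit Types (mu F G H : measure R R) (f : R -> \bar R).

Lemma int_def mu f : (forall x, 0 <= f x) ->
  \int[mu]_x f x = ereal_sup [set sintegral mu h |
     h in [set h : {nnsfun R >-> R} | forall x, (h x)%:E <= f x]].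
Proof. by move=> f0; rewrite ge0_integralTE. Qed.

Lemma int_mono mu f g : (forall x, 0 <= f x) -> (forall x, f x <= g x) ->
  \int[mu]_x f x <= \int[mu]_x g x.
Proof.
move=> f0 fg; have g0 : forall x, 0 <= g x by move=> x; apply: le_trans (fg x).
rewrite !int_def //; apply: ge_ereal_sup => _ [h hf <-].
by apply: ereal_sup_ubound; exists h => // x; apply: le_trans (fg x).
Qed.

Lemma int_scale mu f (k : R) : (0 <= k)%R -> (forall x, 0 <= f x) ->
  k%:E * \int[mu]_x f x <= \int[mu]_x (k%:E * f x).
Proof.
move=> k0 f0; have kf0 : forall x, 0 <= k%:E * f x by move=> x; rewrite mule_ge0.
have [->|kp] := eqVneq k 0%R.
  by rewrite mul0e; apply: integral_ge0 => x _; rewrite mul0e.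
have kp' : (0 < k)%R by rewrite lt_def kp k0.
rewrite -lee_pdivlMl // (int_def _ _ f0); apply: ge_ereal_sup => _ [h hf <-].
rewrite lee_pdivlMl // -sintegralrM (int_def _ _ kf0).
apply: ereal_sup_ubound; exists (scale_nnsfun h k0) => //= x.
by rewrite EFinM lee_wpmul2l.
Qed.

Variables (F G H : measure R R) (l : R).
Hypothesis l01 : (0 <= l <= 1)%R.
Hypothesis HFG : forall A, measurable A -> H A = l%:E * F A + (1 - l)%:E * G A.

Lemma sint_mix (s : {nnsfun R >-> R}) :
  sintegral H s = l%:E * sintegral F s + (1 - l)%:E * sintegral G s.
Proof.
have [l0 l1] := andP l01.
have l1' : (0 <= 1 - l)%R by rewrite subr_ge0.
rewrite !sintegralE !ge0_mule_fsumr; try by move=> x; apply: nnsfun_mulemu_ge0.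
rewrite -fsbig_split //; apply: eq_fsbigr => x /set_mem [t _ <-].
rewrite HFG //; have sx : 0 <= (s t)%:E by rewrite lee_fin.
rewrite ge0_muleDr ?mule_ge0 // !muleA ![_ * (s t)%:E]muleC //.
Qed.

Lemma mix_upper f : (forall x, 0 <= f x) ->
  \int[H]_x f x <= l%:E * \int[F]_x f x + (1 - l)%:E * \int[G]_x f x.
Proof.
have [l0 l1] := andP l01.
have l1' : (0 <= 1 - l)%R by rewrite subr_ge0.
move=> f0; rewrite (int_def H _ f0); apply: ge_ereal_sup => _ [h hf <-].
rewrite sint_mix; apply: leeD; apply: lee_wpmul2l; rewrite ?lee_fin //;
  rewrite int_def //; apply: ereal_sup_ubound; by exists h.
Qed.

Lemma mix_lower f : (forall x, 0 <= f x) ->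
  l%:E * \int[F]_x f x <= \int[H]_x f x.
Proof.
have [l0 l1] := andP l01.
have l1' : (0 <= 1 - l)%R by rewrite subr_ge0.
move=> f0; have [->|lp] := eqVneq l 0%R.
  by rewrite mul0e; apply: integral_ge0.
have lp' : (0 < l)%R by rewrite lt_def lp l0.
rewrite -lee_pdivlMl // (int_def F _ f0); apply: ge_ereal_sup => _ [h hf <-].
rewrite lee_pdivlMl //; apply: le_trans (_ : sintegral H h <= _).
  by rewrite sint_mix leeDl // mule_ge0 ?lee_fin // sintegral_ge0.
rewrite int_def //; apply: ereal_sup_ubound; by exists h.
Qed.

End Inner.

Section Sub.
Context {R : realType}.
Local Open Scope ereal_scope.

Lemma int_sub (mu : measure R R) (f : R -> \bar R) (gr : R -> R) :
  (forall x, 0 <= f x) -> (forall x, 0 <= gr x)%R ->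
  measurable_fun setT gr ->
  \int[mu]_x (f x + (gr x)%:E) <= \int[mu]_x f x + \int[mu]_x (gr x)%:E.
Proof.
move=> f0 g0 mg.
have fg0 : forall x, 0 <= f x + (gr x)%:E by move=> x; rewrite adde_ge0 ?lee_fin.
rewrite (int_def _ _ fg0); apply: ge_ereal_sup => _ [s hs <-].
pose a x := Num.min (s x) (gr x).
pose c x := Num.max (s x - gr x)%R 0%R.
have ms : measurable_fun setT (fun x => s x) by exact: measurable_funPT.
have ma : measurable_fun setT a by apply: measurable_realfun.measurable_minr.
have mc : measurable_fun setT c.
  apply: measurable_realfun.measurable_maxr => //; apply: measurable_realfun.measurable_funB => //.
have sac : forall x, s x = (a x + c x)%R.
  move=> x; rewrite /a /c.
  case: (leP (s x) (gr x)) => h.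
    rewrite (_ : Num.max (s x - gr x)%R 0%R = 0%R) ?addr0 //.
    by apply/max_idPr; rewrite subr_le0.
  rewrite (_ : Num.max (s x - gr x)%R 0%R = (s x - gr x)%R); last first.
    by apply/max_idPl; rewrite subr_ge0 ltW.
  by rewrite addrC subrK.
have a0 : forall x, (0 <= a x)%R by move=> x; rewrite /a le_min g0 andbT.
have c0 : forall x, (0 <= c x)%R by move=> x; rewrite /c le_max lexx orbT.
rewrite -integralT_nnsfun.
rewrite (eq_integral (fun x => (a x)%:E + (c x)%:E)); last first.
  by move=> x _; rewrite sac EFinD.
rewrite ge0_integralD //; last 4 first.
- by move=> x _; rewrite lee_fin.
- by apply/measurable_realfun.measurable_EFinP.
- by move=> x _; rewrite lee_fin.
- by apply/measurable_realfun.measurable_EFinP.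
rewrite addeC; apply: leeD.
  apply: int_mono => x; first by rewrite lee_fin.
  have := hs x; rewrite /c; case: (leP (s x - gr x)%R 0%R) => h.
    by move=> _; apply: f0.
  by rewrite EFinB leeBlDr.
apply: int_mono => x; first by rewrite lee_fin.
by rewrite lee_fin /a ge_min lexx orbT.
Qed.

End Sub.

Section Model.
Context {R : realType}.
Variables (delta x0 : R).
Hypothesis d01 : (0 < delta < 1)%R.
Hypothesis x0p : (0 < x0)%R.

Lemma best_rcons h x : best x0 (rcons h x) = Num.max (best x0 h) x.
Proof.
elim: h => [|a h IH] /=; first by rewrite maxC.
by rewrite IH maxA.
Qed.

Lemma best_ge h : (x0 <= best x0 h)%R.
Proof. by elim: h => [|a h IH] //=; rewrite le_max IH orbT. Qed.

Lemma best_gt0 h : (0 < best x0 h)%R.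
Proof. exact: lt_le_trans x0p (best_ge h). Qed.

Lemma best_rcons_le h x : (best x0 (rcons h x) <= best x0 h + `|x|)%R.
Proof.
rewrite best_rcons ge_max; apply/andP; split.
  by rewrite lerDl.
have := best_gt0 h; have := ler_norm x; lra.
Qed.

Local Open Scope ereal_scope.

Lemma Un_ge0 q (Q : probability R R) n h : is_rule q ->
  0 <= Un delta x0 q Q n h.
Proof.
move=> qr; have [d0 d1] := andP d01.
elim: n h => [|n IH] h /=; have /andP[q0 q1] := qr h;
  have := best_gt0 h => b0.
  by rewrite lee_fin mulr_ge0 // ltW.
have q0' : (0 <= 1 - q h)%R by rewrite subr_ge0.
apply: adde_ge0; first by rewrite lee_fin mulr_ge0 // ltW.
apply: mule_ge0; first by rewrite lee_fin mulr_ge0 // ltW.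
by apply: integral_ge0 => x _; apply: IH.
Qed.


Lemma int_affine (Q : probability R R) (a : R) : (0 <= a)%R ->
  \int[Q]_x (a%:E + (`|x|)%:E) = a%:E + \int[Q]_x (`|x|)%:E.
Proof.
move=> a0; rewrite ge0_integralD //; try (by move=> x _; rewrite lee_fin);
  try (by apply/measurable_realfun.measurable_EFinP; exact: measurable_realfun.normr_measurable).
rewrite integral_cst //; congr (_ + _); rewrite -[RHS]mule1; congr (_ * _); exact: probability_setT.
Qed.

Lemma Un_ub q (Q : probability R R) (m K : R) n h : is_rule q ->
  \int[Q]_x (`|x|)%:E <= m%:E -> (0 <= K)%R -> (delta * (K + m) <= K)%R ->
  Un delta x0 q Q n h <= (best x0 h + K)%:E.
Proof.
move=> qr mQ K0 dK; have [d0 d1] := andP d01.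
elim: n h => [|n IH] h /=; have /andP[q0 q1] := qr h;
  have := best_gt0 h => b0.
  rewrite lee_fin; nra.
have q0' : (0 <= 1 - q h)%R by rewrite subr_ge0.
set b := best x0 h.
have hI : \int[Q]_x Un delta x0 q Q n (rcons h x) <= (b + K + m)%:E.
  apply: le_trans (_ : \int[Q]_x ((b + K)%:E + (`|x|)%:E) <= _).
    apply: int_mono => x; first exact: Un_ge0.
    apply: le_trans (IH _) _; rewrite -EFinD lee_fin.
    have := best_rcons_le h x; rewrite -/b; lra.
  rewrite int_affine; last by rewrite /b; have := best_gt0 h; lra.
  by rewrite [X in _ <= X]EFinD leeD2l.
apply: le_trans (_ : (q h * b)%:E + ((1 - q h) * delta)%:E * (b + K + m)%:E <= _).
  by rewrite leeD2l // lee_wpmul2l // lee_fin mulr_ge0 // ltW.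
rewrite -EFinM -EFinD lee_fin.
have e1 : (0 <= (1 - q h) * ((1 - delta) * b))%R.
  by rewrite mulr_ge0 // mulr_ge0 // ?subr_ge0 ?ltW // ltW.
have e2 : (0 <= (1 - q h) * (K - delta * (K + m)))%R.
  by rewrite mulr_ge0 // subr_ge0.
have e3 : (0 <= q h * K)%R by rewrite mulr_ge0.
nra.
Qed.

Lemma int_Un_ub q (Q Q' : probability R R) (m K : R) n h : is_rule q ->
  \int[Q]_x (`|x|)%:E <= m%:E -> \int[Q']_x (`|x|)%:E <= m%:E ->
  (0 <= K)%R -> (delta * (K + m) <= K)%R ->
  \int[Q']_x Un delta x0 q Q n (rcons h x) <= (best x0 h + K + m)%:E.
Proof.
move=> qr mQ mQ' K0 dK; set b := best x0 h.
apply: le_trans (_ : \int[Q']_x ((b + K)%:E + (`|x|)%:E) <= _).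
  apply: int_mono => x; first exact: Un_ge0.
  apply: le_trans (@Un_ub q Q m K n (rcons h x) qr mQ K0 dK) _.
  rewrite -EFinD lee_fin.
  have := best_rcons_le h x; rewrite -/b; lra.
rewrite int_affine; last by rewrite /b; have := best_gt0 h; lra.
by rewrite [X in _ <= X]EFinD leeD2l.
Qed.

Lemma int_affine2 (Q : probability R R) (a k : R) : (0 <= a)%R -> (0 <= k)%R ->
  \int[Q]_x (a%:E + (k * `|x|)%:E) = a%:E + k%:E * \int[Q]_x (`|x|)%:E.
Proof.
move=> a0 k0.
rewrite ge0_integralD //; try (by move=> x _; rewrite lee_fin ?mulr_ge0).
- rewrite integral_cst //; congr (_ + _).
    rewrite -[RHS]mule1; congr (_ * _); exact: probability_setT.
  under eq_integral do rewrite EFinM.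
  rewrite ge0_integralZl //.
  by apply/measurable_realfun.measurable_EFinP; exact: measurable_realfun.normr_measurable.
- apply/measurable_realfun.measurable_EFinP.
  apply: measurable_realfun.measurable_funM => //.
Qed.

End Model.

Section MixModel.
Context {R : realType}.
Variables (delta x0 : R).
Hypothesis d01 : (0 < delta < 1)%R.
Hypothesis x0p : (0 < x0)%R.
Variables (F G H : probability R R) (l : R).
Hypothesis l01 : (0 <= l <= 1)%R.
Hypothesis HFG : forall A, measurable A -> H A = (l%:E * F A + (1 - l)%:E * G A)%E.
Local Open Scope ereal_scope.
Let leT {a b c : \bar R} : a <= b -> b <= c -> a <= c.
Proof. exact: le_trans. Qed.
Let Ug := @Un_ge0 R delta x0 d01 x0p.
Let bg := @best_gt0 R x0 x0p.
Let mlow := @mix_lower R F G H l l01 HFG.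
Let mup := @mix_upper R F G H l l01 HFG.

Lemma Un_mix_lower q n h : is_rule q ->
  (l ^+ n)%:E * Un delta x0 q F n h <= Un delta x0 q H n h.
Proof.
move=> qr; have [d0 d1] := andP d01; have [l0 l1] := andP l01.
elim: n h => [|n IH] h /=; have /andP[q0 q1] := qr h;
  have := bg h => b0.
  by rewrite expr0 mul1e.
have q0' : (0 <= 1 - q h)%R by rewrite subr_ge0.
set b := best x0 h.
set c := ((1 - q h) * delta)%R.
have c0 : (0 <= c)%R by rewrite mulr_ge0 // ltW.
set IF := \int[F]_x Un delta x0 q F n (rcons h x).
have IF0 : 0 <= IF by apply: integral_ge0 => x _; apply: Ug.
have hI : (l ^+ n.+1)%:E * IF <= \int[H]_x Un delta x0 q H n (rcons h x).
  apply: (leT _ (mlow _ (fun x => Ug q H n (rcons h x) qr))).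
  rewrite exprS EFinM -muleA; apply: lee_wpmul2l; first by rewrite lee_fin.
  apply: (leT (int_scale _ _ _ (exprn_ge0 n l0) (fun x => Ug q F n (rcons h x) qr))).
  apply: int_mono => x; last by apply: IH.
  by rewrite mule_ge0 ?lee_fin ?exprn_ge0 //; apply: Ug.
rewrite ge0_muleDr; last 2 first.
- by rewrite lee_fin mulr_ge0 // ltW.
- by rewrite mule_ge0 // lee_fin.
apply: leeD.
  rewrite -EFinM lee_fin.
  have := exprn_ile1 n.+1 l0 l1; have : (0 <= q h * b)%R by rewrite mulr_ge0 // ltW.
  nra.
rewrite muleCA; apply: lee_wpmul2l; first by rewrite lee_fin.
exact: hI.
Qed.

Variables (m K al be : R).
Hypothesis mF : \int[F]_x (`|x|)%:E <= m%:E.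
Hypothesis mG : \int[G]_x (`|x|)%:E <= m%:E.
Hypothesis K0 : (0 <= K)%R.
Hypothesis dK : (delta * (K + m) <= K)%R.
Hypothesis al0 : (0 <= al)%R.
Hypothesis dal : (delta * (al + 1) <= al)%R.
Hypothesis be0 : (0 <= be)%R.
Hypothesis dbe : (delta * ((al + 1) * m + be + K) <= be)%R.

Lemma mH : \int[H]_x (`|x|)%:E <= m%:E.
Proof.
have [l0 l1] := andP l01.
have nn : forall x : R, 0 <= (`|x|)%:E by move=> x; rewrite lee_fin.
apply: (leT (mup _ nn)).
apply: (leT (_ : _ <= l%:E * m%:E + (1 - l)%:E * m%:E)).
  by apply: leeD; apply: lee_wpmul2l; rewrite ?lee_fin ?subr_ge0.
by rewrite -!EFinM -EFinD lee_fin; lra.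
Qed.

Lemma m0 : (0 <= m)%R.
Proof.
rewrite -lee_fin; apply: (leT _ mF); apply: integral_ge0 => x _.
by rewrite lee_fin.
Qed.

Lemma Un_mix_upper q n h : is_rule q ->
  Un delta x0 q H n h <=
  Un delta x0 q F n h + ((1 - l) * (al * best x0 h + be))%:E.
Proof.
move=> qr; have [d0 d1] := andP d01; have [l0 l1] := andP l01.
have l0' : (0 <= 1 - l)%R by rewrite subr_ge0.
elim: n h => [|n IH] h /=; have /andP[q0 q1] := qr h;
  have := bg h => b0.
  by rewrite leeDl // lee_fin; apply: mulr_ge0 => //; apply: addr_ge0 => //; apply: mulr_ge0 => //; apply: ltW.
have q0' : (0 <= 1 - q h)%R by rewrite subr_ge0.
set b := best x0 h.
set c := ((1 - q h) * delta)%R.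
have c0 : (0 <= c)%R by rewrite mulr_ge0 // ltW.
have cd : (c <= delta)%R by rewrite /c; nra.
set IF := \int[F]_x Un delta x0 q F n (rcons h x).
have IF0 : 0 <= IF by apply: integral_ge0 => x _; apply: Ug.
set JF := \int[F]_x Un delta x0 q H n (rcons h x).
set JG := \int[G]_x Un delta x0 q H n (rcons h x).
set JH := \int[H]_x Un delta x0 q H n (rcons h x).
have JF0 : 0 <= JF by apply: integral_ge0 => x _; apply: Ug.
have JG0 : 0 <= JG by apply: integral_ge0 => x _; apply: Ug.
pose a := ((1 - l) * (al * b + be))%R.
pose k := ((1 - l) * al)%R.
have a0 : (0 <= a)%R by rewrite mulr_ge0 // addr_ge0 // mulr_ge0 // ltW.
have k0 : (0 <= k)%R by rewrite mulr_ge0.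
have h1 : JF <= IF + (a + k * m)%:E.
  apply: (leT (int_mono _ _ (fun x => Un delta x0 q F n (rcons h x) + (a + k * `|x|)%:E) _ _)).
  - by move=> x; apply: Ug.
  - move=> x; apply: (leT (IH _)); rewrite leeD2l // lee_fin.
    have := @best_rcons_le R x0 x0p h x; rewrite -/b => hb.
    have : (0 <= (1 - l) * al * (b + `|x| - best x0 (rcons h x)))%R.
      by rewrite mulr_ge0 ?mulr_ge0 // subr_ge0.
    rewrite /a /k; nra.
  have gf0 : forall x : R, 0 <= Un delta x0 q F n (rcons h x) by move=> x; apply: Ug.
  have gg0 : forall x : R, (0 <= a + k * `|x|)%R by move=> x; rewrite addr_ge0 // mulr_ge0.
  have gm : measurable_fun setT (fun x : R => a + k * `|x|)%R.
    apply: (measurable_realfun.measurable_funD (f := fun=> a) (g := fun x : R => (k * `|x|)%R)) => //.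
    apply: (measurable_realfun.measurable_funM (f := fun=> k) (g := fun x : R => `|x|%R)) => //.
    exact: measurable_realfun.normr_measurable.
  apply: (leT (int_sub F _ _ gf0 gg0 gm)).
  rewrite -/IF leeD2l // (eq_integral (fun x : R => a%:E + (k * `|x|)%:E)); last first.
    by move=> x _; rewrite EFinD.
  rewrite int_affine2 // EFinD leeD2l // EFinM -EFinM [X in _ <= X]EFinM.
  by apply: lee_wpmul2l; rewrite ?lee_fin.
have h2 : JG <= (b + K + m)%:E.
  exact: (@int_Un_ub R delta x0 d01 x0p q H G m K n h qr mH mG K0 dK).
pose E := (a + k * m + (1 - l) * (b + K + m))%R.
have E0 : (0 <= E)%R.
  have mm := m0.
  have e1 : (0 <= k * m)%R by rewrite mulr_ge0.
  have e2 : (0 <= (1 - l) * (b + K + m))%R.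
    by rewrite mulr_ge0 // addr_ge0 // addr_ge0 // ltW.
  rewrite /E; lra.
have h3 : JH <= IF + E%:E.
  apply: (leT (mup _ (fun x => Ug q H n (rcons h x) qr))).
  rewrite -/JF -/JG.
  apply: (leT (_ : _ <= JF + (1 - l)%:E * (b + K + m)%:E)).
    apply: leeD.
      rewrite -[X in _ <= X]mul1e; apply: lee_wpmul2r => //.
    by apply: lee_wpmul2l; rewrite ?lee_fin.
  apply: (leT (_ : _ <= IF + (a + k * m)%:E + (1 - l)%:E * (b + K + m)%:E)).
    by rewrite leeD2r.
  by rewrite -EFinM -addeA -EFinD /E.
rewrite -addeA leeD2l //.
apply: (leT (_ : _ <= c%:E * (IF + E%:E))).
  by apply: lee_wpmul2l; rewrite ?lee_fin.
rewrite ge0_muleDr // ?lee_fin // leeD2l // -EFinM lee_fin.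
have e1 : (0 <= (1 - l) * b * (al - delta * (al + 1)))%R.
  by rewrite mulr_ge0 ?mulr_ge0 ?subr_ge0 // ltW.
have e2 : (0 <= (1 - l) * (be - delta * ((al + 1) * m + be + K)))%R.
  by rewrite mulr_ge0 ?subr_ge0.
have e3 : (0 <= (delta - c) * E)%R.
  by rewrite mulr_ge0 ?subr_ge0.
rewrite /E /a /k in e3 *; nra.
Qed.

End MixModel.

Section Final.
Context {R : realType}.
Variables (delta x0 : R).
Hypothesis d01 : (0 < delta < 1)%R.
Hypothesis x0p : (0 < x0)%R.
Local Open Scope ereal_scope.

Lemma Un_le_U q (Q : probability R R) n h :
  Un delta x0 q Q n h <= U delta x0 q Q h.
Proof. by apply: ereal_sup_ubound; exists n. Qed.

Lemma U_le q (Q : probability R R) h B :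
  (forall n, Un delta x0 q Q n h <= B) -> U delta x0 q Q h <= B.
Proof. by move=> hB; apply: ge_ereal_sup => _ [n _ <-]. Qed.

Lemma U_le_V q (Q : probability R R) h : is_rule q ->
  U delta x0 q Q h <= V delta x0 Q h.
Proof. by move=> qr; apply: ereal_sup_ubound; exists q. Qed.

Lemma V_le (Q : probability R R) h B :
  (forall q, is_rule q -> U delta x0 q Q h <= B) -> V delta x0 Q h <= B.
Proof. by move=> hB; apply: ge_ereal_sup => _ [q qr <-]; apply: hB. Qed.

Lemma rule1 : is_rule (fun _ : seq R => 1%R).
Proof. by move=> h; rewrite ler01 lexx. Qed.

Lemma fin_bnd (x : \bar R) (a r : R) : a%:E <= x -> x <= r%:E -> x = (fine x)%:E.
Proof. by case: x. Qed.

Variables (m K : R).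
Hypothesis K0 : (0 <= K)%R.
Hypothesis dK : (delta * (K + m) <= K)%R.

Lemma U_bnd q (Q : probability R R) h : is_rule q ->
  \int[Q]_x (`|x|)%:E <= m%:E ->
  0 <= U delta x0 q Q h /\ U delta x0 q Q h <= (best x0 h + K)%:E.
Proof.
move=> qr mQ; split.
  apply: (le_trans _ (Un_le_U q Q 0 h)); exact: (@Un_ge0 R delta x0 d01 x0p q Q 0 h qr).
apply: U_le => n; exact: (@Un_ub R delta x0 d01 x0p q Q m K n h qr mQ K0 dK).
Qed.

Lemma V_bnd (Q : probability R R) h :
  \int[Q]_x (`|x|)%:E <= m%:E ->
  (best x0 h)%:E <= V delta x0 Q h /\ V delta x0 Q h <= (best x0 h + K)%:E.
Proof.
move=> mQ; split.
  apply: (le_trans _ (U_le_V _ Q h rule1)); apply: (le_trans _ (Un_le_U _ Q 0 h)).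
  by rewrite /= mul1r.
apply: V_le => q qr; exact: (proj2 (U_bnd q Q h qr mQ)).
Qed.

End Final.

Lemma bern {R : realType} (t : R) n : (0 <= t <= 1)%R -> (1 - n%:R * t <= (1 - t) ^+ n)%R.
Proof.
move=> /andP[t0 t1]; elim: n => [|n IH]; first by rewrite mul0r subr0 expr0.
rewrite -natr1 exprS.
have h1 : ((1 - t) * (1 - n%:R * t) <= (1 - t) * (1 - t) ^+ n)%R.
  by apply: ler_wpM2l; rewrite // subr_ge0.
have h2 : (0 <= n%:R * t * t)%R by rewrite !mulr_ge0.
nra.
Qed.

Lemma lim_arg {R : realType} (A u Dd : R) n : (0 <= A)%R -> (0 <= Dd)%R ->
  (forall t, (0 < t)%R -> (t <= 1)%R -> (A * (1 - n%:R * t) <= u + t * Dd)%R) ->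
  (A <= u)%R.
Proof.
move=> A0 D0 hA; rewrite leNgt; apply/negP => Au.
pose e := (A - u)%R; pose M := (A * n%:R + Dd + 1)%R.
have e0 : (0 < e)%R by rewrite /e subr_gt0.
have M0 : (0 < M)%R.
  rewrite /M; have : (0 <= A * n%:R)%R by rewrite mulr_ge0. lra.
pose t := (e / (e + M))%R.
have eM : (0 < e + M)%R by lra.
have t0 : (0 < t)%R by rewrite /t divr_gt0.
have tE : (t * (e + M) = e)%R by rewrite /t mulrVK // unitfE gt_eqF.
have t1 : (t <= 1)%R.
  rewrite /t ler_pdivrMr // mul1r; lra.
have := hA t t0 t1.
have : (0 < t * e)%R by rewrite mulr_gt0.
rewrite /M /e in tE *; nra.
Qed.

Lemma cons_mix {R : realType} (F G H : probability R R) (l : R) (s : seq R) :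
  (0 <= l < 1)%R ->
  (forall A, measurable A -> H A = (l%:E * F A + (1 - l)%:E * G A)%E) ->
  consistent G s -> consistent H s.
Proof.
move=> /andP[l0 l1] HFG; rewrite /consistent.
elim: s => [|a s IH]; first by rewrite !big_nil.
rewrite !big_cons => hG.
have P0 : (0 <= \big[*%E/1%E]_(x <- s) G [set x])%E.
  by apply: prode_ge0 => i _.
have hne : (G [set a] * \big[*%E/1%E]_(x <- s) G [set x])%E != 0.
  by rewrite gt_eqF.
rewrite mule_eq0 negb_or in hne; case/andP: hne => ha hs.
have Ga : (0 < G [set a])%E by rewrite lt0e ha /=.
have Gs : (0 < \big[*%E/1%E]_(x <- s) G [set x])%E by rewrite lt0e hs P0.
apply: mule_gt0; last exact: IH.
rewrite HFG; last exact: measurable_set1.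
apply: (lt_le_trans _ (_ : (1 - l)%:E * G [set a] <= _)%E).
  by apply: mule_gt0 => //; rewrite lte_fin subr_gt0.
by rewrite leeDr // mule_ge0 // lee_fin.
Qed.

Theorem proposition2 (R : realType) (delta x0 : R) (X : set R)
  (FF : set (probability R R)) (p : seq R -> R) (h : seq R) :
  0 < delta < 1 -> measurable X -> X `<=` [set x | 0 <= x] -> X 0 -> 0 < x0 ->
  FF `<=` environment X -> convex_envs FF ->
  is_rule p -> (forall x, x \in h -> X x) ->
  (exists F, FF F /\ consistent F h) ->
  ereal_inf [set (U delta x0 p F h * (V delta x0 F h)^-1)%E
              | F in [set F | FF F /\ consistent F h]]
  = ereal_inf [set (U delta x0 p F h * (V delta x0 F h)^-1)%E | F in FF].
Proof.
move=> d01 mX Xpos X0 x0p FFenv cvx pr hX [G [FFG Gc]].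
have [d0 d1] := andP d01.
set b := best x0 h.
have b0 : 0 < b := @best_gt0 R x0 x0p h.
apply/eqP; rewrite eq_le; apply/andP; split; last first.
  by apply: ereal_inf_le_tmp => _ [F [FF_F _] <-]; exists F.
apply: le_ereal_inf_tmp => _ [F FF_F <-].
set I := ereal_inf _.
have mfin : forall Q, FF Q -> exists mq : R,
    0 <= mq /\ (\int[Q]_x (`|x|)%:E)%E = mq%:E.
  move=> Q /FFenv [_ /integrableP [_ iQ]].
  have i0 : (0 <= \int[Q]_x (`|x|)%:E)%E.
    by apply: integral_ge0 => x _; rewrite lee_fin.
  exists (fine (\int[Q]_x (`|x|)%:E)); split; first by rewrite fine_ge0.
  by rewrite fineK // ge0_fin_numE.
have [mF_ [mF0 eF]] := mfin F FF_F.
have [mG_ [mG0 eG]] := mfin G FFG.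
pose m := mF_ + mG_.
have mF : (\int[F]_x (`|x|)%:E <= m%:E)%E by rewrite eF lee_fin /m; lra.
have mG : (\int[G]_x (`|x|)%:E <= m%:E)%E by rewrite eG lee_fin /m; lra.
have m0 : 0 <= m by rewrite /m; lra.
have s0 : 0 < 1 - delta by rewrite subr_gt0.
pose K := delta * m / (1 - delta).
pose al := delta / (1 - delta).
pose be := delta * ((al + 1) * m + K) / (1 - delta).
have K0 : 0 <= K by rewrite /K divr_ge0 // ?mulr_ge0 // ltW.
have al0 : 0 <= al by rewrite /al divr_ge0 // ltW.
have be0 : 0 <= be.
  have hh : 0 <= (al + 1) * m + K by rewrite addr_ge0 // mulr_ge0 // addr_ge0.
  by rewrite /be divr_ge0 // ?mulr_ge0 // ltW.
have s0' : 1 - delta != 0 by rewrite gt_eqF.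
have dK : delta * (K + m) <= K.
  rewrite le_eqVlt; apply/orP; left; apply/eqP; rewrite /K; field.
  by [].
have dal : delta * (al + 1) <= al.
  rewrite le_eqVlt; apply/orP; left; apply/eqP; rewrite /al; field.
  by rewrite lt0r_neq0.
have dbe : delta * ((al + 1) * m + be + K) <= be.
  rewrite le_eqVlt; apply/orP; left; apply/eqP; rewrite /be; field.
  by rewrite lt0r_neq0.
have [UF0 UF1] := @U_bnd R delta x0 d01 x0p m K K0 dK p F h pr mF.
have [VF0 VF1] := @V_bnd R delta x0 d01 x0p m K K0 dK F h mF.
set u := fine (U delta x0 p F h).
set v := fine (V delta x0 F h).
have Uu : U delta x0 p F h = u%:E := fin_bnd _ _ _ UF0 UF1.
have Vv : V delta x0 F h = v%:E := fin_bnd _ _ _ VF0 VF1.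
have u0 : 0 <= u by rewrite -lee_fin -Uu.
have vb : b <= v by rewrite -lee_fin -Vv.
have v0 : 0 < v by lra.
have ratio : (U delta x0 p F h * (V delta x0 F h)^-1)%E = (u / v)%:E.
  by rewrite Uu Vv inver gt_eqF.
rewrite ratio.
suff claim : forall c : R, (c%:E <= I)%E -> c <= u / v.
  move: claim; case: I => [r||] claim //.
  - by rewrite lee_fin; apply: claim.
  - have hh := claim (u / v + 1) (leey _); exfalso; lra.
  - by rewrite leNye.
move=> c cI.
have uv0 : 0 <= u / v by rewrite divr_ge0 // ltW.
have [c0|cp] := leP c 0; first by lra.
rewrite ler_pdivlMr //.
suff : v <= u / c by rewrite ler_pdivlMr // mulrC.
rewrite -lee_fin -Vv; apply: V_le => q qr; apply: U_le => n.
have [W0 W1] : (0 <= Un delta x0 q F n h)%E /\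
    (Un delta x0 q F n h <= (b + K)%:E)%E.
  split; first exact: Un_ge0.
  exact: (@Un_ub R delta x0 d01 x0p q F m K n h qr mF K0 dK).
set w := fine (Un delta x0 q F n h).
have Ww : Un delta x0 q F n h = w%:E := fin_bnd _ _ _ W0 W1.
have w0 : 0 <= w by rewrite -lee_fin -Ww.
rewrite Ww lee_fin ler_pdivlMr // mulrC.
apply: (@lim_arg R (c * w) u (al * b + be) n).
- by rewrite mulr_ge0 // ltW.
- by rewrite addr_ge0 // mulr_ge0 // ltW.
move=> t t0 t1.
pose l := 1 - t.
have l01 : 0 <= l <= 1 by rewrite /l; apply/andP; split; lra.
have l01' : 0 <= l < 1 by rewrite /l; apply/andP; split; lra.
have [H [FFH HFG]] := cvx F G FF_F FFG l l01.
have Hc : consistent H h := cons_mix F G H l h l01' HFG Gc.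
have cH : (c%:E <= U delta x0 p H h * (V delta x0 H h)^-1)%E.
  apply: (le_trans cI); apply: ereal_inf_lbound; exists H => //.
have mHm := @mH R F G H l l01 HFG m mF mG.
have [UH0 UH1] := @U_bnd R delta x0 d01 x0p m K K0 dK p H h pr mHm.
have [VH0 VH1] := @V_bnd R delta x0 d01 x0p m K K0 dK H h mHm.
set uh := fine (U delta x0 p H h).
set vh := fine (V delta x0 H h).
have Uuh : U delta x0 p H h = uh%:E := fin_bnd _ _ _ UH0 UH1.
have Vvh : V delta x0 H h = vh%:E := fin_bnd _ _ _ VH0 VH1.
have vhb : b <= vh by rewrite -lee_fin -Vvh.
have vh0 : 0 < vh by lra.
move: cH; rewrite Uuh Vvh inver gt_eqF // -EFinM lee_fin ler_pdivlMr // => cH.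
have tl : 1 - l = t by rewrite /l; ring.
have up : uh <= u + t * (al * b + be).
  rewrite -lee_fin -Uuh; apply: U_le => n'.
  apply: (le_trans (@Un_mix_upper R delta x0 d01 x0p F G H l l01 HFG m K al be
     mF mG K0 dK al0 dal be0 dbe p n' h pr)).
  rewrite tl EFinD -Uu; apply: leeD2r; exact: Un_le_U.
have lo : l ^+ n * w <= vh.
  rewrite -lee_fin -Vvh EFinM -Ww.
  apply: (le_trans (@Un_mix_lower R delta x0 d01 x0p F G H l l01 HFG q n h qr)).
  apply: (le_trans (Un_le_U delta x0 q H n h)); exact: U_le_V.
have bn := @bern R t n (ltac:(apply/andP; split; lra)).
rewrite -/l in bn.
have e1 : 0 <= c * w * (l ^+ n - (1 - n%:R * t)).
  by rewrite mulr_ge0 ?mulr_ge0 ?subr_ge0 // ltW.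
have e2 : 0 <= c * (vh - l ^+ n * w) by rewrite mulr_ge0 ?subr_ge0 // ltW.
nra.
Qed.
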